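(* Let $\kappa$ be an infinite cardinal and let $B(\kappa)=(\kappa^{\aleph_0},\mathcal U)$ be the countable power of the discrete uniform space of cardinality $\kappa$. Then $B(\kappa)$ is co-universal in the class of all non-archimedean uniform spaces whose uniformity is induced by a complete metric and whose topological weight is $\le\kappa$: that is, $B(\kappa)$ belongs to this class, and for every (nonempty) $Y$ in this class there exists a uniformly continuous surjection $f\colon B(\kappa)\to Y$ which is a quotient map of topological spaces.
   Context: A uniform space is non-archimedean if its uniformity has a base consisting of equivalence relations. All uniform spaces are Hausdorff. *)

(* Defs.v *)
From HB Require Import structures.
From mathcomp Require Import all_boot all_order all_algebra.
From mathcomp Require Import all_classical all_reals.
From mathcomp Require Import topology.
Set Implicit Arguments. Unset Strict Implicit. Unset Printing Implicit Defensive.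
Import Order.TTheory GRing.Theory Num.Theory.
Local Open Scope classical_set_scope.
Local Open Scope ring_scope.

Definition equiv_rel_set {U : Type} (E : set (U * U)) : Prop :=
  [/\ (forall x, E (x, x)),
      (forall x y, E (x, y) -> E (y, x)) &
      (forall x y z, E (x, y) -> E (y, z) -> E (x, z))].

Definition non_archimedean (U : uniformType) : Prop :=
  forall E : set (U * U), entourage E ->
    exists F : set (U * U), [/\ entourage F, equiv_rel_set F & F `<=` E].

Definition is_metric {R : realType} {U : Type} (d : U -> U -> R) : Prop :=
  [/\ (forall x y, 0 <= d x y),
      (forall x y, d x y = 0 <-> x = y),
      (forall x y, d x y = d y x) &
      (forall x y z, d x z <= d x y + d y z)].

Definition induces_uniformity {R : realType} {U : uniformType}
  (d : U -> U -> R) : Prop :=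
  forall E : set (U * U),
    entourage E <-> exists2 e : R, 0 < e & [set p | d p.1 p.2 < e] `<=` E.

Definition complete_metric {R : realType} {U : Type} (d : U -> U -> R) : Prop :=
  forall u : nat -> U,
    (forall e : R, 0 < e -> exists N : nat,
       forall m n, (N <= m)%N -> (N <= n)%N -> d (u m) (u n) < e) ->
    exists x : U, forall e : R, 0 < e -> exists N : nat,
       forall n, (N <= n)%N -> d (u n) x < e.

Definition complete_metrizable_unif (R : realType) (U : uniformType) : Prop :=
  exists d : U -> U -> R, [/\ is_metric d, induces_uniformity d & complete_metric d].

Definition weight_le (U : uniformType) (K : Type) : Prop :=
  exists2 B : set (set U), basis B & (B #<= [set: K])%card.

Definition in_class (R : realType) (K : Type) (U : uniformType) : Prop :=
  [/\ non_archimedean U, complete_metrizable_unif R U & weight_le U K].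

Definition Bk (K : choiceType) : uniformType :=
  {ptws nat -> discrete_topology K}.

Definition quotient_map {X Y : topologicalType} (f : X -> Y) : Prop :=
  [/\ continuous f,
      (forall y, exists x, f x = y) &
      (forall A : set Y, open (f @^-1` A) -> open A)].

(* Main.v *)
Require Import Defs.
From HB Require Import structures.
From mathcomp Require Import all_boot all_order all_algebra.
From mathcomp Require Import all_classical all_reals.
From mathcomp Require Import topology finmap ssrnum.
Set Implicit Arguments. Unset Strict Implicit. Unset Printing Implicit Defensive.
Local Open Scope classical_set_scope.

Lemma Zorn_seed T (P : set (set T)) (s0 : set T) : s0 !=set0 -> P s0 ->
  (forall F : set (set T), F `<=` P -> total_on F subset ->
     (forall X, F X -> s0 `<=` X) -> F !=set0 -> P (\bigcup_(X in F) X)) ->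
  exists A, [/\ P A, s0 `<=` A & forall B, A `<` B -> P B -> False].
Proof.
move=> s0N0 Ps0 HF.
have HZ : forall F : set (set T), F `<=` [set A | A = set0 \/ (P A /\ s0 `<=` A)] -> total_on F subset -> [set A | A = set0 \/ (P A /\ s0 `<=` A)] (\bigcup_(X in F) X).
  move=> F FP Ftot.
  have [[X FX XN0]|none] := pselect (exists2 X, F X & X !=set0).
    right.
    set F' := [set X | F X /\ X !=set0].
    have eqU : \bigcup_(X in F) X = \bigcup_(X in F') X.
      apply/seteqP; split => x [Y FY Yx]; last by exists Y => //; case: FY.
      by exists Y => //; split => //; exists x.
    have F'P Z : F' Z -> P Z /\ s0 `<=` Z.
      move=> [/FP [->|//] /set0P]; by rewrite eqxx.
    rewrite eqU; split.
      apply: HF.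
      - by move=> Y /F'P[].
      - by move=> Y Z [FY _] [FZ _]; apply: Ftot.
      - by move=> Y /F'P[].
      - by exists X.
    by move=> x s0x; exists X; [split|apply: (proj2 (F'P X _))].
  left; apply/seteqP; split => [x [Y FY Yx]|//]; exfalso; apply: none; exists Y => //; by exists x.
have [A [PA Amax]] := Zorn_bigcup HZ.
  
  case: PA => [A0|[PA s0A]].
    by exfalso; apply: (Amax s0); [rewrite A0; split => //; case: s0N0 => z s0z; move=> /(_ z s0z)|by right; split].
  exists A; split => // B AB PB; apply: (Amax B AB); right; split => //.
  exact: subset_trans s0A (properW AB).
Qed.
Lemma card_compare (T U : Type) :
  (exists f : T -> U, injective f) \/ (exists g : U -> T, injective g).
Proof.
pose P := [set R : set (T * U) |
  (forall x y y', R (x, y) -> R (x, y') -> y = y') /\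
  (forall x x' y, R (x, y) -> R (x', y) -> x = x')].
have HZ : forall F : set (set (T * U)), F `<=` P -> total_on F subset ->
    P (\bigcup_(X in F) X).
  move=> F FP Ftot; split.
    move=> x y y' [X FX Xp] [X' FX' Xp'].
    have [XX'|X'X] := Ftot X X' FX FX'.
      by apply: (proj1 (FP X' FX')) x y y' (XX' _ Xp) Xp'.
    by apply: (proj1 (FP X FX)) x y y' Xp (X'X _ Xp').
  move=> x x' y [X FX Xp] [X' FX' Xp'].
  have [XX'|X'X] := Ftot X X' FX FX'.
    by apply: (proj2 (FP X' FX')) x x' y (XX' _ Xp) Xp'.
  by apply: (proj2 (FP X FX)) x x' y Xp (X'X _ Xp').
have [R [[Rf Ri] Rmax]] := Zorn_bigcup HZ.
have [dom|/existsNP [x0 nx0]] := pselect (forall x, exists y, R (x, y)).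
  left; exists (fun x => sval (cid (dom x))) => x x' e.
  apply: (Ri x x' (sval (cid (dom x)))); first exact: svalP (cid (dom x)).
  by rewrite e; exact: svalP (cid (dom x')).
have [cod|/existsNP [y0 ny0]] := pselect (forall y, exists x, R (x, y)).
  right; exists (fun y => sval (cid (cod y))) => y y' e.
  apply: (Rf (sval (cid (cod y))) y y'); first exact: svalP (cid (cod y)).
  by rewrite e; exact: svalP (cid (cod y')).
exfalso; apply: (Rmax (R `|` [set (x0, y0)])).
  split; first by move=> p Rp; left.
  move=> /(_ (x0, y0) (or_intror erefl)) Rxy; apply: nx0; by exists y0.
split.
  move=> x y y' [Rp|E] [Rp'|E'];
  try (case: E => ex ey); try (case: E' => ex' ey'); subst;
  first [exact: Rf Rp Rp' | done | (exfalso; apply: nx0; eexists; eassumption)].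
move=> x x' y [Rp|E] [Rp'|E'];
  try (case: E => ex ey); try (case: E' => ex' ey'); subst;
  first [exact: Ri Rp Rp' | done | (exfalso; apply: ny0; eexists; eassumption)].
Qed.

Lemma sig_eqP (A : Type) (P : A -> Prop) (u v : {x | P x}) :
  sval u = sval v -> u = v.
Proof.
case: u v => [x px] [y py] /= exy; subst y; congr exist; exact: Prop_irrelevance.
Qed.

Section Hessenberg.
Variables (T : Type) (e : nat -> T).
Hypothesis einj : injective e.

Definition Sof (W : set (T + (T * T) * T)) : set T := [set a | W (inl a)].
Definition Gof (W : set (T + (T * T) * T)) : set ((T * T) * T) :=
  [set q | W (inr q)].
Definition good (W : set (T + (T * T) * T)) : Prop :=
 [/\ (forall p c c', Gof W (p, c) -> Gof W (p, c') -> c = c'),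
     (forall p p' c, Gof W (p, c) -> Gof W (p', c) -> p = p'),
     (forall a b c, Gof W ((a, b), c) -> [/\ Sof W a, Sof W b & Sof W c]) &
     (forall a b, Sof W a -> Sof W b -> exists c, Gof W ((a, b), c))].

Definition seed : set (T + (T * T) * T) := fun w =>
  match w with
  | inl a => exists n, a = e n
  | inr (p, c) => exists m n, p = (e m, e n) /\ c = e (choice.pickle ((m, n) : (nat * nat)%type))
  end.

Lemma good_seed : good seed.
Proof.
split.
- move=> p c c' [m [n [-> ->]]] [m' [n' [[/einj em /einj en] ->]]].
  by rewrite em en.
- move=> p p' c [m [n [-> ->]]] [m' [n' [-> /einj /(pcan_inj choice.pickleK) [-> ->]]]].
  by [].
- by move=> a b c [m [n [[-> ->] ->]]]; split; eexists.
- move=> a b [m ->] [n ->]; exists (e (choice.pickle ((m, n) : (nat * nat)%type))).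
  by exists m, n.
Qed.

Lemma good_chain (F : set (set (T + (T * T) * T))) :
  F `<=` good -> total_on F subset -> good (\bigcup_(X in F) X).
Proof.
move=> Fg Ftot; split.
- move=> p c c' [X FX Xp] [X' FX' Xp'].
  have [XX'|X'X] := Ftot X X' FX FX'.
    by case: (Fg X' FX') => H _ _ _; apply: (H _ _ _ (XX' _ Xp) Xp').
  by case: (Fg X FX) => H _ _ _; apply: (H _ _ _ Xp (X'X _ Xp')).
- move=> p p' c [X FX Xp] [X' FX' Xp'].
  have [XX'|X'X] := Ftot X X' FX FX'.
    by case: (Fg X' FX') => _ H _ _; apply: (H _ _ _ (XX' _ Xp) Xp').
  by case: (Fg X FX) => _ H _ _; apply: (H _ _ _ Xp (X'X _ Xp')).
- move=> a b c [X FX Xp]; case: (Fg X FX) => _ _ /(_ a b c Xp) [? ? ?] _.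
  by split; exists X.
- move=> a b [X FX Xa] [X' FX' Xb].
  have [XX'|X'X] := Ftot X X' FX FX'.
    case: (Fg X' FX') => _ _ _ /(_ a b (XX' _ Xa) Xb) [c Gc].
    by exists c; exists X'.
  case: (Fg X FX) => _ _ _ /(_ a b Xa (X'X _ Xb)) [c Gc].
  by exists c; exists X.
Qed.


Lemma hessenberg : exists p : T * T -> T, injective p.
Proof.
have [W [gW sW Wmax]] := @Zorn_seed _ good seed
  (ex_intro _ (inl (e 0)) (ex_intro _ 0%N erefl)) good_seed
  (fun F Fg Ftot _ _ => good_chain Fg Ftot).
pose S := Sof W; pose G := Gof W.
case: gW => G1 G2 G3 G4.
pose g a b := match pselect (exists c, G ((a, b), c)) with
  | left h => sval (cid h) | right _ => a end.
have gG a b : S a -> S b -> G ((a, b), g a b).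
  move=> Sa Sb; rewrite /g; case: pselect => [h|nh].
    exact: (svalP (cid h)).
  by exfalso; apply: nh; exact: G4.
have gS a b : S a -> S b -> S (g a b).
  by move=> Sa Sb; case: (G3 _ _ _ (gG a b Sa Sb)).
have ginj a b a' b' : S a -> S b -> S a' -> S b' -> g a b = g a' b' ->
    a = a' /\ b = b'.
  move=> Sa Sb Sa' Sb' E.
  have := G2 _ _ _ (gG a b Sa Sb); rewrite E => /(_ _ (gG a' b' Sa' Sb')).
  by case.
have Se n : S (e n) by apply: sW; exists n.
have e01 : e 0 <> e 1 by move/einj.
have e02 : e 0 <> e 2 by move/einj.
have e12 : e 1 <> e 2 by move/einj.
have [[j jinj]|[h hinj]] := card_compare {x | ~ S x} {x | S x}.
  pose phi x := match pselect (S x) with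
    | left _ => g (e 0) x | right H => g (e 1) (sval (j (exist _ x H))) end.
  have phiS x : S (phi x).
    rewrite /phi; case: pselect => [Sx|nSx]; first exact: gS (Se 0%N) Sx.
    exact: gS (Se 1%N) (svalP (j _)).
  have phiinj : injective phi.
    move=> x y; rewrite /phi.
    case: pselect => [Sx|nSx]; case: pselect => [Sy|nSy].
    - by move/(ginj _ _ _ _ (Se 0%N) Sx (Se 0%N) Sy) => [_ ->].
    - by move/(ginj _ _ _ _ (Se 0%N) Sx (Se 1%N) (svalP (j _))) => [/e01].
    - by move/(ginj _ _ _ _ (Se 1%N) (svalP (j _)) (Se 0%N) Sy) => [/esym/e01].
    - by move/(ginj _ _ _ _ (Se 1%N) (svalP (j _)) (Se 1%N) (svalP (j _))) => [_ /sig_eqP /jinj []].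
  exists (fun p => g (phi p.1) (phi p.2)) => [[x y] [x' y']] /= E.
  by have [/phiinj -> /phiinj ->] := ginj _ _ _ _ (phiS x) (phiS y) (phiS x') (phiS y') E.
exfalso.
pose hh a := match pselect (S a) with
  | left H => sval (h (exist _ a H)) | right _ => a end.
have hhN a : S a -> ~ S (hh a).
  by rewrite /hh; case: pselect => // H _; exact: svalP (h _).
have hhinj a a' : S a -> S a' -> hh a = hh a' -> a = a'.
  rewrite /hh; case: pselect => // Ha _; case: pselect => // Ha' _.
  by move/sig_eqP/hinj => [].
pose B := [set b | exists2 a, S a & hh a = b].
pose k b := match pselect (exists a, S a /\ hh a = b) with
  | left H => sval (cid H) | right _ => b end.
have kS b : B b -> S (k b) /\ hh (k b) = b.
  move=> [a Sa <-]; rewrite /k; case: pselect => [H|nH].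
    exact: (svalP (cid H)).
  by exfalso; apply: nH; exists a.
have SB x : S x -> B x -> False.
  by move=> Sx [a Sa ax]; apply: (hhN a Sa); rewrite ax.
pose S' x := S x \/ B x.
pose k' x := match pselect (S x) with left _ => x | right _ => k x end.
have k'S x : S' x -> S (k' x).
  rewrite /k'; case: pselect => // nSx [//|Bx]; exact: (kS x Bx).1.
have k'inj x x' : S' x -> S' x' -> (S x <-> S x') -> k' x = k' x' -> x = x'.
  rewrite /k'; case: pselect => Sx; case: pselect => Sx'.
  - by move=> _ _ _.
  - by move=> _ _ [/(_ Sx)].
  - by move=> _ _ [_ /(_ Sx')].
  move=> [//|Bx] [//|Bx'] _ E.
  by rewrite -(kS x Bx).2 -(kS x' Bx').2 E.
pose tag a b := match pselect (S a) with
  | left _ => e 1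
  | right _ => match pselect (S b) with left _ => e 0 | right _ => e 2 end end.
have tagS a b : S (tag a b).
  by rewrite /tag; case: pselect => _; last case: pselect.
have tag_eq a b a' b' : ~ (S a /\ S b) -> ~ (S a' /\ S b') ->
    tag a b = tag a' b' -> (S a <-> S a') /\ (S b <-> S b').
  rewrite /tag; case: (pselect (S a)) => Sa; case: (pselect (S a')) => Sa';
    case: (pselect (S b)) => Sb; case: (pselect (S b')) => Sb';
    move=> n1 n2 E; first [tauto | by move/einj: E => /eqP].
pose enc a b := hh (g (tag a b) (g (k' a) (k' b))).
have encB a b : S' a -> S' b -> B (enc a b).
  move=> Sa Sb; exists (g (tag a b) (g (k' a) (k' b))) => //.
  exact: gS _ _ (tagS a b) (gS _ _ (k'S a Sa) (k'S b Sb)).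
have encinj a b a' b' : S' a -> S' b -> S' a' -> S' b' ->
    ~ (S a /\ S b) -> ~ (S a' /\ S b') -> enc a b = enc a' b' ->
    a = a' /\ b = b'.
  move=> Sa Sb Sa' Sb' n1 n2 /hhinj E.
  have {E} := E (gS _ _ (tagS a b) (gS _ _ (k'S a Sa) (k'S b Sb)))
    (gS _ _ (tagS a' b') (gS _ _ (k'S a' Sa') (k'S b' Sb'))).
  move=> /ginj [] //; try (by apply: gS; apply: k'S).
  move=> /(tag_eq _ _ _ _ n1 n2) [ea eb] /ginj [] //; try (by apply: k'S).
  by move=> /(k'inj _ _ Sa Sa' ea) -> /(k'inj _ _ Sb Sb' eb) ->.
pose W' := W `|` (fun w => match w with
  | inl b => B b
  | inr ((a, b), c) => [/\ S' a, S' b, ~ (S a /\ S b) & c = enc a b] end).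
apply: (Wmax W').
  split; first by move=> w Ww; left.
  move=> /(_ (inl (hh (e 0)))) H.
  have : S (hh (e 0)) by apply: H; right; exists (e 0).
  exact: hhN.
have GS a b c : G ((a, b), c) -> S a /\ S b.
  by move=> /G3 [].
split.
- move=> [a b] c c' [Gc|[Sa Sb n ->]] [Gc'|[Sa' Sb' n' ->]] //.
  + exact: G1 Gc Gc'.
  + by exfalso; apply: n'; exact: GS Gc.
  + by exfalso; apply: n; exact: GS Gc'.
- move=> [a b] [a' b'] c [Gc|[Sa Sb n Ec]] [Gc'|[Sa' Sb' n' Ec']].
  + exact: G2 Gc Gc'.
  + exfalso; have [_ _ Sc] := G3 _ _ _ Gc; apply: (SB c Sc).
    by rewrite Ec'; apply: encB.
  + exfalso; have [_ _ Sc] := G3 _ _ _ Gc'; apply: (SB c Sc).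
    by rewrite Ec; apply: encB.
  + by have [-> ->] := encinj _ _ _ _ Sa Sb Sa' Sb' n n' (etrans (esym Ec) Ec').
- move=> a b c [Gc|[Sa Sb n ->]].
    by have [? ? ?] := G3 _ _ _ Gc; split; left.
  by split => //; right; apply: encB.
- move=> a b Sa Sb.
  have [[Sa0 Sb0]|n] := pselect (S a /\ S b).
    by have [c Gc] := G4 _ _ Sa0 Sb0; exists c; left.
  by exists (enc a b); right.
Qed.

End Hessenberg.

Lemma nat_inj (K : Type) : infinite_set [set: K] -> exists e : nat -> K, injective e.
Proof.
move=> /infiniteP /card_leP [f].
exists (fun n => set_val (f (SigSub (mem_set (I : [set: nat] n))))).
move=> m n E; have E2 := val_inj E. have E3 := injT E2. exact: (congr1 set_val E3).
Qed.
Lemma card_le_cover (X K : Type) (x0 : X) (A : set X) :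
  (A #<= [set: K])%card -> exists G : K -> X, forall a, A a -> exists k, G k = a.
Proof.
move=> /card_leP [f].
pose fv (a : X) (Aa : A a) : K := set_val (f (SigSub (mem_set Aa))).
exists (fun k => match pselect (exists a, exists Aa : A a, fv a Aa = k) with
  | left H => sval (cid H) | right _ => x0 end).
move=> a Aa; exists (fv a Aa).
case: pselect => [H|nH]; last by exfalso; apply: nH; exists a, Aa.
case: (cid H) => b /= [Ab E].
rewrite /fv in E; have E2 := injT (val_inj E).
by have := congr1 set_val E2.
Qed.
Lemma inj_card_leT (T U : Type) (f : T -> U) : injective f ->
  ([set: T] #<= [set: U])%card.
Proof.
move=> finj.
have /card_esym := @inj_card_eq _ _ [set: T] f (in2W finj).
rewrite card_eq_le => /andP[H _].
exact: card_le_trans H (card_leT _).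
Qed.

Lemma seq_inj (T : Type) (e : nat -> T) (p : T * T -> T) :
  injective e -> injective p -> exists q : seq T -> T, injective q.
Proof.
move=> einj pinj.
pose fix enc' (s : seq T) := if s is x :: r then p (x, enc' r) else e 0%N.
exists (fun s => p (e (size s), enc' s)) => s s' /pinj [/einj].
elim: s s' => [|x r IH] [|x' r'] //= [/IH {}IH] /pinj [-> /IH ->] //.
Qed.

Lemma fset_bound (T : choiceType) (F : {fset T}) (f : T -> nat) :
  exists N, forall x, x \in F -> (f x < N)%N.
Proof.
exists (\max_(j <- F) (f j).+1)%N => x xF.
exact: (@leq_bigmax_seq _ _ xpredT (fun j => (f j).+1) x xF isT).
Qed.
Section S.
Variable K : choiceType.
Definition cyl n : set (Bk K * Bk K) := [set p | forall i, (i < n)%N -> p.1 i = p.2 i].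

Lemma ent_cyl1 i : @entourage (Bk K) [set p | p.1 i = p.2 i].
Proof.
rewrite /entourage /= /sup_ent.
have h : `[< @entourage (initial_topology (fun f : Bk K => f i)) [set p | p.1 i = p.2 i] >].
  apply/asboolP. exists (range (fun x : discrete_topology K => (x,x))).
    by [].
  by move=> [a b] /= [x _ [-> ->]].
eexists; [|exact: subset_refl].
exists [fset (exist _ ((i : {classic nat}), [set p : Bk K * Bk K | p.1 i = p.2 i]) h)]%fset => //.
  by move=> x _; rewrite in_setT.
apply/seteqP; split => p /=.
  by move=> /(_ (exist _ ((i : {classic nat}), [set p : Bk K * Bk K | p.1 i = p.2 i]) h)); apply; rewrite /= inE.
by move=> hp j; rewrite /= inE => /eqP ->.
Qed.


Lemma ent_cyl n : @entourage (Bk K) (cyl n).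
Proof.
elim: n => [|n IH].
  rewrite (_ : cyl 0 = setT); first exact: entourageT.
  by apply/seteqP; split => p //= _ i.
rewrite (_ : cyl n.+1 = cyl n `&` [set p | p.1 n = p.2 n]).
  by apply: filterI => //; exact: ent_cyl1.
apply/seteqP; split => p /=.
  by move=> h; split; [move=> i lin; apply: h; apply: ltnW|apply: h].
move=> [h1 h2] i; rewrite ltnS leq_eqVlt => /orP[/eqP ->//|]; exact: h1.
Qed.

Lemma ent_cylP E : @entourage (Bk K) E -> exists n, cyl n `<=` E.
Proof.
rewrite /entourage /= /sup_ent => -[A [F _ <-] AE].
have [N HN] := @fset_bound _ F (fun i => ((projT1 i).1 : nat)).
exists N => p hp.
apply: AE => i iF.
have := projT2 i => /asboolP [V /= entV VS].
apply: VS => /=. apply: entV => /=.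
exists (p.1 (projT1 i).1) => //. congr pair. apply: hp.
exact: HN.
Qed.
End S.

From mathcomp Require Import ssrnum.
Import Num.Theory GRing.Theory Order.TTheory.
Local Open Scope ring_scope.

Lemma archi_inv (R : realType) (e : R) : 0 < e -> exists n : nat, (n.+1%:R)^-1 < e.
Proof.
move=> e0; exists (Num.Def.trunc e^-1).
rewrite -[X in _ < X]invrK ltf_pV2 ?posrE ?invr_gt0 ?ltr0n //.
exact: Num.Theory.truncnS_gt.
Qed.

Lemma inv_lt (R : realType) (m n : nat) :
  ((m.+1%:R : R)^-1 < (n.+1%:R)^-1) = (n < m)%N.
Proof. by rewrite ltf_pV2 ?posrE ?ltr0n // ltr_nat. Qed.

Section metric.
Variables (R : realType) (K : eqType).

Definition dB (x y : nat -> K) : R :=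
  match pselect (exists n, x n != y n) with
  | left h => ((ex_minn h).+1%:R)^-1
  | right _ => 0 end.

Lemma dB_ge0 x y : 0 <= dB x y.
Proof. by rewrite /dB; case: pselect => // h; rewrite invr_ge0 ler0n. Qed.

Lemma dB_lt x y n : dB x y < (n.+1%:R)^-1 <-> forall i, (i <= n)%N -> x i = y i.
Proof.
rewrite /dB; case: pselect => [h|nh].
  case: ex_minnP => m Hm minm; rewrite inv_lt; split.
    move=> nm i ilen; apply/eqP; case: eqP => // /eqP xy.
    by have := minm i xy; rewrite leqNgt (leq_ltn_trans ilen nm).
  move=> H; rewrite ltnNge; apply/negP => mn.
  by move: Hm; rewrite (H m mn) eqxx.
split; last by move=> _; rewrite invr_gt0 ltr0n.
move=> _ i _.
by case: (eqVneq (x i) (y i)) => // xy; exfalso; apply: nh; exists i.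
Qed.

Lemma dB_eq0 x y : dB x y = 0 <-> x = y.
Proof.
rewrite /dB; case: pselect => [h|nh]; split => //.
- by move/eqP; rewrite invr_eq0 pnatr_eq0.
- move=> exy; exfalso; have [n] := h; by rewrite exy eqxx.
- move=> _; apply: funext => n.
  by case: (eqVneq (x n) (y n)) => // xy; exfalso; apply: nh; exists n.
Qed.

Lemma dB_sym x y : dB x y = dB y x.
Proof.
rewrite /dB; case: pselect => [h|nh]; case: pselect => [h'|nh'] //.
- case: ex_minnP => m Hm minm; case: ex_minnP => m' Hm' minm'.
  suff -> : m = m' by [].
  apply/eqP; rewrite eqn_leq minm ?minm' //; first by rewrite eq_sym.
  by rewrite eq_sym.
- by exfalso; apply: nh'; case: h => n hn; exists n; rewrite eq_sym.
- by exfalso; apply: nh; case: h' => n hn; exists n; rewrite eq_sym.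
Qed.

Lemma dB_tri x y z : dB x z <= dB x y + dB y z.
Proof.
rewrite {1}/dB; case: pselect => [h|nh]; last by rewrite addr_ge0 ?dB_ge0.
case: ex_minnP => m Hm minm.
have [lt1|ge1] := ltP (dB x y) (m.+1%:R)^-1.
  have [lt2|ge2] := ltP (dB y z) (m.+1%:R)^-1.
    move/dB_lt: lt1 => /(_ m (leqnn _)) e1.
    move/dB_lt: lt2 => /(_ m (leqnn _)) e2.
    by move: Hm; rewrite e1 e2 eqxx.
  exact: ler_wpDl (dB_ge0 _ _) ge2.
exact: ler_wpDr (dB_ge0 _ _) ge1.
Qed.

End metric.

Section Bk_class.
Variables (R : realType) (K : choiceType).
Hypothesis hK : infinite_set [set: K].

Lemma dB_cyl (x y : Bk K) n : @dB R K x y < (n.+1%:R)^-1 <-> cyl n.+1 (x, y).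
Proof.
rewrite dB_lt /cyl /=; split => H i; first by rewrite ltnS; apply: H.
by move=> ?; apply: H; rewrite ltnS.
Qed.

Lemma cylS n : @cyl K n.+1 `<=` @cyl K n.
Proof. by move=> p H i lin; apply: H; exact: ltnW. Qed.

Lemma Bk_nonarch : non_archimedean (Bk K).
Proof.
move=> E /ent_cylP [n sE]; exists (@cyl K n); split => //; first exact: ent_cyl.
split.
- by move=> x i.
- by move=> x y H i /H.
- by move=> x y z H1 H2 i lin; exact: etrans (H1 i lin) (H2 i lin).
Qed.

Lemma Bk_induces : induces_uniformity (fun x y : Bk K => @dB R K x y).
Proof.
move=> E; split.
  move=> /ent_cylP [n sE]; exists (n.+1%:R)^-1; first by rewrite invr_gt0 ltr0n.
  move=> [x y] /= /dB_cyl /cylS; exact: sE.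
move=> [e e0 sE]; have [n ne] := archi_inv e0.
apply: (filterS _ (ent_cyl K n.+1)) => -[x y] /dB_cyl H; apply: sE => /=.
exact: lt_trans H ne.
Qed.

Lemma Bk_complete : complete_metric (fun x y : Bk K => @dB R K x y).
Proof.
move=> u Cu.
have /choice [N HN] : forall i : nat, exists N : nat, forall m n, (N <= m)%N -> (N <= n)%N ->
    @dB R K (u m) (u n) < (i.+1%:R)^-1.
  by move=> i; apply: Cu; rewrite invr_gt0 ltr0n.
exists (fun i => u (N i) i) => e e0.
have [j je] := archi_inv e0.
exists (\max_(i < j.+1) N i)%N => n Mn.
apply: lt_trans je; apply/dB_lt => i ilej.
have ij : (i < j.+1)%N by rewrite ltnS.
have Nin : (N i <= n)%N.
  exact: leq_trans (@leq_bigmax _ (fun k : 'I_j.+1 => N k) (Ordinal ij)) Mn.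
by move/dB_lt: (HN i n (N i) Nin (leqnn _)) => /(_ i (leqnn _)).
Qed.


Lemma Bk_metric : is_metric (fun x y : Bk K => @dB R K x y).
Proof.
split.
- by move=> x y; exact: dB_ge0.
- by move=> x y; exact: dB_eq0.
- by move=> x y; exact: dB_sym.
- by move=> x y z; exact: dB_tri.
Qed.

Lemma Bk_weight : weight_le (Bk K) K.
Proof.
have [k0 _] := infinite_setN0 hK.
pose cylset (s : seq K) : set (Bk K) :=
  [set x | forall i, (i < size s)%N -> x i = nth k0 s i].
exists (cylset @` [set: seq K]).
  split.
    move=> _ [s _ <-]; rewrite openE => x hx.
    apply/nbhsP; exists (@cyl K (size s)); first exact: ent_cyl.
    move=> y; rewrite /xsection /= => /set_mem hxy i lis.
    by rewrite -(hx i lis); symmetry; exact: (hxy i lis).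
  move=> x A /nbhsP [E entE sA].
  have [n sE] := ent_cylP entE.
  exists (cylset (mkseq x n)).
    split; first by exists (mkseq x n).
    by move=> i; rewrite size_mkseq => lin; rewrite nth_mkseq.
  move=> y hy; apply: sA; rewrite /xsection /=; apply/mem_set; apply: sE => i lin /=.
  by have := hy i; rewrite size_mkseq nth_mkseq // => ->.
have [e einj] := nat_inj hK.
have [p pinj] := hessenberg einj.
have [q qinj] := seq_inj einj pinj.
exact: card_le_trans (card_image_le _ _) (inj_card_leT qinj).
Qed.

Lemma Bk_in_class : in_class R K (Bk K).
Proof.
split; first exact: Bk_nonarch.
  exists (fun x y : Bk K => @dB R K x y); split.
  - exact: Bk_metric.
  - exact: Bk_induces.
  - exact: Bk_complete.
exact: Bk_weight.
Qed.

End Bk_class.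

Section Ypart.
Variables (R : realType) (K : choiceType) (Y : uniformType) (y0 : Y).
Hypothesis hY : in_class R K Y.

Lemma Y_main : exists f : Bk K -> Y,
  unif_continuous f /\ (forall y, exists x, f x = y) /\ quotient_map f.
Proof.
case: hY => nonarch [d [[d0 d_eq0 dsym dtri] dind dcomp]] [BY basisY BYle].
have dent n : entourage [set p : Y * Y | d p.1 p.2 < (n.+1%:R)^-1].
  by apply/dind; exists (n.+1%:R)^-1; rewrite ?invr_gt0 ?ltr0n.
have /choice [F HF] : forall n : nat, exists F : set (Y * Y),
    [/\ entourage F, equiv_rel_set F & F `<=` [set p | d p.1 p.2 < (n.+1%:R)^-1]].
  by move=> n; apply: nonarch; exact: dent.
have Fent n : entourage (F n) by case: (HF n).
have Frefl n z : F n (z, z) by case: (HF n) => _ [+ _ _] _; apply.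
have Fsym n z w : F n (z, w) -> F n (w, z) by case: (HF n) => _ [_ + _] _; apply.
have Ftrans n z w v : F n (z, w) -> F n (w, v) -> F n (z, v).
  by case: (HF n) => _ [_ _ +] _; apply.
have Fd n : F n `<=` [set p | d p.1 p.2 < (n.+1%:R)^-1] by case: (HF n).
clear HF.
pose fix E n := if n is n'.+1 then E n' `&` F n' else [set: Y * Y].
have Eent n : entourage (E n).
  elim: n => [|n IH] /=; first exact: entourageT.
  exact: filterI.
have Erefl n z : E n (z, z).
  by elim: n => [//|n IH] /=; split.
have Esym n z w : E n (z, w) -> E n (w, z).
  elim: n => [//|n IH] /= [H1 H2]; split; [exact: IH|exact: Fsym].
have Etrans n z w v : E n (z, w) -> E n (w, v) -> E n (z, v).
  elim: n => [//|n IH] /= [H1 H2] [H3 H4]; split; [exact: IH H1 H3|exact: Ftrans H2 H4].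
have Edec m n : (m <= n)%N -> E n `<=` E m.
  move=> /subnKC <-; elim: (n - m)%N => [|k IH]; first by rewrite addn0.
  by rewrite addnS => p /= [/IH].
have Ed n z w : E n.+1 (z, w) -> d z w < (n.+1%:R)^-1.
  by move=> [_ /Fd].
have [G HG] := card_le_cover set0 BYle.
have hc : forall z : Y, exists c : nat -> K, forall n,
    G (c n) !=set0 /\ G (c n) `<=` [set w | E n.+1 (z, w)].
  move=> z.
  suff H : forall n, exists k, G k !=set0 /\ G k `<=` [set w | E n.+1 (z, w)].
    by have [cz Hcz] := choice H; exists cz.
  move=> n.
  have : nbhs z [set w | E n.+1 (z, w)].
    apply/nbhsP; exists (E n.+1) => // w; rewrite /xsection /= => /set_mem.
    done.
  case: basisY => _ /(_ z) /[apply] -[U [BU Uz] UE].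
  have [k Gk] := HG U BU; exists k; rewrite Gk; split => //; by exists z.
have /choice [c Hc] := hc; clear hc.
pose step n p k := match pselect (exists q, G k q /\ E n (p, q)) with
  | left h => sval (cid h) | right _ => p end.
have stepE n p k : E n (p, step n p k).
  rewrite /step; case: pselect => [h|_]; last exact: Erefl.
  by case: (svalP (cid h)).
pose pts (x : Bk K) := fix pts n := if n is n'.+1 then step n' (pts n') (x n') else y0.
have P1 x n : E n (pts x n, pts x n.+1) by exact: stepE.
have P2 x m n : (m <= n)%N -> E m (pts x m, pts x n).
  move=> /subnKC <-; elim: (n - m)%N => [|k IH]; first by rewrite addn0; exact: Erefl.
  rewrite addnS; apply: Etrans IH _; apply: (Edec _ (m + k)%N); first exact: leq_addr.
  exact: P1.
have P3 x x' n : (forall i, (i < n)%N -> x i = x' i) -> forall m, (m <= n)%N ->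
    pts x m = pts x' m.
  move=> H; elim => [//|m IH] mn /=.
  by rewrite IH ?(ltnW mn) // H.
have cauchy x : forall e : R, 0 < e -> exists N : nat, forall m n,
    (N <= m)%N -> (N <= n)%N -> d (pts x m) (pts x n) < e.
  move=> e e0; have [j je] := archi_inv e0; exists j.+1 => m n jm jn.
  apply: lt_trans je; apply: Ed.
  exact: (Etrans _ _ _ _ (Esym _ _ _ (P2 x _ _ jm)) (P2 x _ _ jn)).
pose f (x : Bk K) : Y := sval (cid (dcomp (pts x) (cauchy x))).
have P4 x n : E n (pts x n, f x).
  have [e e0 se] := (dind (E n)).1 (Eent n).
  have [N HN] := svalP (cid (dcomp (pts x) (cauchy x))) e e0.
  apply: (Etrans _ _ _ _ (P2 x n (maxn n N) (leq_maxl _ _))).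
  by apply: se; apply: HN; exact: leq_maxr.
have P5 x z n : E n (pts x n, z) -> (forall i, (n <= i)%N -> x i = c z i) ->
    f x = z.
  move=> Enz xc.
  have H1 m : (n <= m)%N -> E m (pts x m, z).
    move=> /subnKC <-; elim: (m - n)%N => [|k IH]; first by rewrite addn0.
    rewrite addnS /= /step (xc _ (leq_addr _ _)).
    have [[q0 Gq0] GE] := Hc z (n + k)%N.
    case: pselect => [h|nh].
      by case: (svalP (cid h)) => Gq _; exact: (Esym _ _ _ (GE _ Gq)).
    exfalso; apply: nh; exists q0; split => //.
    apply: (Etrans _ _ _ _ IH); apply: (Edec _ (n + k).+1) => //; exact: (GE _ Gq0).
  have H2 m : E m (f x, z).
    apply: (Edec m (maxn m n)); first exact: leq_maxl.
    exact: (Etrans _ _ _ _ (Esym _ _ _ (P4 x _)) (H1 _ (leq_maxr _ _))).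
  apply/d_eq0; apply/eqP; rewrite eq_le d0 andbT; rewrite leNgt; apply/negP => dpos.
  have [j jd] := archi_inv dpos.
  by have := lt_trans (Ed _ _ _ (H2 j.+1)) jd; rewrite ltxx.
have close U : entourage U -> exists n, forall x x' : Bk K,
    @cyl K n (x, x') -> U (f x, f x').
  move=> /dind [e e0 se]; have [j je] := archi_inv e0.
  exists j.+1 => x x' cxx; apply: se => /=; apply: lt_trans je; apply: Ed.
  have eq := P3 x x' j.+1 cxx j.+1 (leqnn _).
  by apply: (Etrans _ _ _ _ (Esym _ _ _ (P4 x _))); rewrite eq; exact: P4.
have fsurj : forall y, exists x, f x = y.
  by move=> y; exists (c y); apply: (P5 _ _ 0%N).
have fcont : continuous f.
  move=> x A /nbhsP [U entU sU].
  have [n Hn] := close U entU.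
  apply/nbhsP; exists (@cyl K n); first exact: ent_cyl.
  move=> x' /set_mem cx; apply: sU; apply/mem_set; exact: Hn.
exists f; split.
  move=> U entU; have [n Hn] := close U entU.
  apply: (filterS _ (ent_cyl K n)) => -[x x'] /Hn.
  done.
split => //; split => // A oA.
rewrite openE => y Ay.
have fx : f (c y) = y by apply: (P5 _ _ 0%N).
move: oA; rewrite openE => /(_ (c y)); rewrite /= fx => /(_ Ay) /nbhsP [V entV sV].
have [n sVn] := ent_cylP entV.
apply/nbhsP; exists (E n) => // z /set_mem Ez.
pose x' : Bk K := fun i => if (i < n)%N then c y i else c z i.
have agree : forall i, (i < n)%N -> c y i = x' i by move=> i lin; rewrite /x' lin.
have fx' : f x' = z.
  apply: (P5 _ _ n).
    rewrite -(P3 _ _ _ agree n (leqnn _)); apply: (Etrans _ _ _ _ (P4 _ n)).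
    by rewrite fx.
  by move=> i ni; rewrite /x' ltnNge ni.
rewrite -fx'; have : V (c y, x') by apply: sVn.
by move=> /mem_set /sV.
Qed.

End Ypart.

Close Scope ring_scope.
Unset Implicit Arguments.

Theorem lemma6p2 (R : realType) (K : choiceType)
  (hK : infinite_set [set: K]) :
  in_class R K (Bk K) /\
  forall Y : uniformType, [set: Y] !=set0 -> in_class R K Y ->
    exists f : Bk K -> Y,
      unif_continuous f /\ (forall y, exists x, f x = y) /\ quotient_map f.
Proof.
split; first exact: (@Bk_in_class R K hK).
move=> Y [y0 _] hY.
exact: (@Y_main R K Y y0 hY).
Qed.
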